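(* Let $G$ be a connected graph with vertex set $\{u_1,\dots,u_t\}$, $t\ge2$, and let $\mathcal{H}=\{C_{n_1},\dots,C_{n_t}\}$ be a family of cycles with $n_i\ge7$ for all $i$. Then $\dim_l(G\circ\mathcal{H})=\sum_{i=1}^t\lceil n_i/4\rceil$.
   Context: All graphs are finite and simple. For a connected graph $G$, $\dim_l(G)$ is the minimum size of $S\subseteq V(G)$ such that for every two adjacent vertices $x,y$ some $s\in S$ has $d_G(s,x)\ne d_G(s,y)$ ($d_G$ shortest-path distance). Lexicographic product $G\circ\mathcal{H}$ with $H_i=C_{n_i}$: vertex set $\bigcup_i\{u_i\}\times V(H_i)$, $(u_i,v)\sim(u_j,w)$ iff $u_iu_j\in E(G)$, or $i=j$ and $vw\in E(H_i)$. *)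

(* Defs.v *)
From mathcomp Require Import all_boot.
Set Implicit Arguments. Unset Strict Implicit. Unset Printing Implicit Defensive.

Section Graphs.
Variable T : finType.
Variable e : rel T.

Fixpoint reach_within (k : nat) (x y : T) : bool :=
  if k is k'.+1 then (x == y) || [exists z, e x z && reach_within k' z y]
  else x == y.

(* Shortest-path distance (equal to #|T| if y is unreachable from x, which
   never happens in a connected graph since shortest paths have < #|T| edges). *)
Definition gdist (x y : T) : nat :=
  find (fun k => reach_within k x y) (iota 0 #|T|).

Definition local_resolving (S : {set T}) : bool :=
  [forall x, forall y, e x y ==> [exists s in S, gdist s x != gdist s y]].

Definition ldim : nat := \big[minn/#|T|]_(S : {set T} | local_resolving S) #|S|.
End Graphs.

Definition cycle_adj (m : nat) : rel 'I_m :=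
  fun a b => (val b == (val a).+1 %% m) || (val a == (val b).+1 %% m).

Definition lex_cycles (t : nat) (e : rel 'I_t) (n : 'I_t -> nat)
  : rel {i : 'I_t & 'I_(n i)} :=
  fun x y => e (tag x) (tag y) ||
             ((tag x == tag y) && cycle_adj (tagged x) (tagged_as x y)).

Definition ceil_div4 (m : nat) : nat := (m + 3) %/ 4.
Arguments lex_cycles {t} e n.

(* Main.v *)
Require Import Defs.
From mathcomp Require Import all_boot zify.
Set Implicit Arguments. Unset Strict Implicit. Unset Printing Implicit Defensive.
Definition adjN (m a b : nat) : Prop :=
  b = a.+1 \/ (a.+1 = m /\ b = 0) \/ a = b.+1 \/ (b.+1 = m /\ a = 0).


Section Gen.
Variable T : finType.
Variable e : rel T.

Lemma rw_S k x y : reach_within e k x y -> reach_within e k.+1 x y.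
Proof.
elim: k x => [|k IH] x /=; first by move=> ->.
case/orP=> [->//|/existsP[z /andP[exz rz]]].
by apply/orP; right; apply/existsP; exists z; apply/andP; split => //; exact: IH.
Qed.

Lemma rw_le k k' x y : k <= k' -> reach_within e k x y -> reach_within e k' x y.
Proof.
move=> /subnK <-; elim: (k' - k) => [//|d IH] r; rewrite addSn; exact/rw_S/IH.
Qed.

Lemma gdist_le k x y : k < #|T| -> (gdist e x y <= k) = reach_within e k x y.
Proof.
move=> kT; rewrite /gdist; apply/idP/idP => [le|r].
  have hs : has (fun k => reach_within e k x y) (iota 0 #|T|).
    by rewrite has_find size_iota (leq_ltn_trans le).
  have := nth_find 0 hs; rewrite nth_iota ?add0n; last by move: hs; rewrite has_find size_iota.
  by apply: rw_le.
rewrite leqNgt; apply/negP => lt.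
have := before_find 0 lt; rewrite nth_iota // add0n => H; by rewrite H in r.
Qed.

Lemma rw1 x y : reach_within e 1 x y = (x == y) || e x y.
Proof.
rewrite /=; congr (_ || _); apply/existsP/idP => [[z /andP[h /eqP<-]]//|h].
by exists y; rewrite h eqxx.
Qed.

Hypothesis T3 : 2 < #|T|.

Lemma gdist0 x y : (gdist e x y == 0) = (x == y).
Proof. by rewrite -leqn0 gdist_le // (ltn_trans _ T3). Qed.

Lemma gdist1 x y : x != y -> e x y -> gdist e x y = 1.
Proof.
move=> nxy exy; apply/eqP; rewrite eqn_leq gdist_le ?rw1 ?exy ?orbT ?(ltn_trans _ T3) //.
by rewrite lt0n gdist0.
Qed.

Lemma gdistN1 x y : ~~ e x y -> gdist e x y != 1.
Proof.
move=> nexy; apply/eqP => h.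
have := leqnn (gdist e x y); rewrite {2}h gdist_le ?(ltn_trans _ T3) // rw1 (negbTE nexy) orbF.
by rewrite -gdist0 h.
Qed.


Lemma gdist2 x y z : x != y -> ~~ e x y -> e x z -> e z y -> gdist e x y = 2.
Proof.
move=> nxy nexy exz ezy; apply/eqP; rewrite eqn_leq gdist_le //.
apply/andP; split.
  have r1 : reach_within e 1 z y by rewrite rw1 ezy orbT.
  by apply/orP; right; apply/existsP; exists z; apply/andP.
by rewrite ltnNge (gdist_le _ _ (ltn_trans _ T3)) // rw1 negb_or nxy nexy.
Qed.

Variable f : T -> T.
Hypothesis finj : injective f.
Hypothesis fe : forall x y, e (f x) (f y) = e x y.

Lemma rw_f k x y : reach_within e k (f x) (f y) = reach_within e k x y.
Proof.
elim: k x => [|k IH] x /=; first by rewrite inj_eq.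
rewrite inj_eq //; congr (_ || _); apply/existsP/existsP => [[z]|[z]].
  have /codomP[z' ->] := injF_onto finj z.
  by rewrite fe IH => h; exists z'.
by rewrite -fe -IH => h; exists (f z).
Qed.

Lemma gdist_f x y : gdist e (f x) (f y) = gdist e x y.
Proof. by rewrite /gdist; apply: eq_find => k; rewrite rw_f. Qed.
End Gen.



Lemma ceil_le m k : m <= k * 4 -> ceil_div4 m <= k.
Proof. rewrite /ceil_div4; lia. Qed.
Lemma lt_div4 j m : j < m -> j %/ 4 < ceil_div4 m.
Proof. rewrite /ceil_div4; lia. Qed.

Definition distP m w a b : Prop :=
  (w = a /\ w <> b) \/ (w = b /\ w <> a) \/
  (w <> a /\ w <> b /\ ((adjN m w a /\ ~ adjN m w b) \/ (~ adjN m w a /\ adjN m w b))).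

Lemma cover1 m a b : 7 <= m -> a < m -> b < m -> (b = a.+1 \/ (a.+1 = m /\ b = 0)) ->
  exists w, w < m /\ w %% 4 = 0 /\ distP m w a b.
Proof.
move=> m7 am bm [hb|[ha hb]]; subst b; last first.
  by exists 0; split => //; split => //; right; left; lia.
have := divn_eq a 4; have := ltn_pmod a (isT : 0 < 4).
move: (a %/ 4) (a %% 4) => q r r4 ha.
have [r0|r0] := eqVneq r 0.
  by exists (q * 4); rewrite modnMl; split; [lia|split=>//; left; lia].
have [r1|r1] := eqVneq r 1.
  exists (q * 4); rewrite modnMl; split; [lia|split=>//; right; right].
  rewrite /adjN; split; [lia|split; [lia|left; split; lia]].
have [c|c] := ltnP (q * 4 + 4) m.
  have [r2|r2] := eqVneq r 2.
    exists (q * 4 + 4); rewrite -mulSnr modnMl; split; [lia|split=>//; right; right].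
    rewrite /adjN; split; [lia|split; [lia|right; split; lia]].
  exists (q * 4 + 4); rewrite -mulSnr modnMl; split; [lia|split=>//; right; left; lia].
exists 0; rewrite mod0n; split; [lia|split=>//].
have [r2|r2] := eqVneq r 2.
  right; right; rewrite /adjN; split; [lia|split; [lia|right; split; lia]].
right; left; lia.
Qed.

Lemma distP_sym m w a b : distP m w a b -> distP m w b a.
Proof.
rewrite /distP.
case=> [[h1 h2]|[[h1 h2]|[h1 [h2 [[h3 h4]|[h3 h4]]]]]].
- by right; left.
- by left.
- by right; right; split=> //; split=> //; right.
- by right; right; split=> //; split=> //; left.
Qed.

Lemma cover m a b : 7 <= m -> a < m -> b < m -> adjN m a b ->
  exists w, w < m /\ w %% 4 = 0 /\ distP m w a b.
Proof.
move=> m7 am bm h.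
have [h1|h1] : (b = a.+1 \/ (a.+1 = m /\ b = 0)) \/ (a = b.+1 \/ (b.+1 = m /\ a = 0)).
  by move: h; rewrite /adjN; tauto.
  exact: cover1.
have [w [w1 [w2 w3]]] := cover1 m7 bm am h1.
by exists w; split=> //; split=> //; apply: distP_sym.
Qed.

Lemma cover_out m a : 7 <= m -> a < m -> exists w, (w = 0 \/ w = 4) /\ ~ adjN m w a.
Proof.
move=> m7 am; rewrite /adjN; case: (a =P 1) => h; first by exists 4; lia.
case: (a.+1 =P m) => h'; [exists 4 | exists 0]; lia.
Qed.

Definition delta m a w := let v := a + 2 + m - w in
  if v < m then v else if v < m + m then v - m else v - (m + m).

Lemma delta_lt m a b w : 7 <= m -> a < m -> w < m -> b = (if a.+1 == m then 0 else a.+1) ->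
  (w = a \/ adjN m w a \/ w = b \/ adjN m w b) -> delta m a w < 4.
Proof.
rewrite /delta /adjN => m7 am wm hb hn.
case: ifP => h1; [|case: ifP => h2]; case: (a.+1 =P m) hb => h3 hb; lia.
Qed.

Lemma delta_inj m a a' w : a < m -> a' < m -> w < m -> delta m a w = delta m a' w -> a = a'.
Proof.
rewrite /delta /= => am am' wm.
case: ifP => h1; [|case: ifP => h2]; case: ifP => h3; try case: ifP => h4; lia.
Qed.


Lemma modS (m a : nat) : a < m -> a.+1 %% m = if a.+1 == m then 0 else a.+1.
Proof. by move=> am; case: eqP => [->|ne]; rewrite ?modnn // modn_small; lia. Qed.



Lemma adjP m (a b : 'I_m) : reflect (adjN m a b) (cycle_adj a b).
Proof.
case: a b => [a Ha] [b Hb]; rewrite /cycle_adj /= (modS Ha) (modS Hb) /adjN.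
case: (a.+1 =P m); case: (b.+1 =P m) => h1 h2; apply: (iffP idP); lia.
Qed.

Definition rot m d (p : 'I_m) : 'I_m :=
  Ordinal (ltn_pmod (p + d) (leq_ltn_trans (leq0n p) (ltn_ord p))).

Lemma rot_inj m d : injective (@rot m d).
Proof.
move=> p q /(congr1 val) /= /eqP; rewrite eqn_modDr !modn_small // => /eqP.
exact: val_inj.
Qed.

Lemma rot_adj m d (p q : 'I_m) : cycle_adj (rot d p) (rot d q) = cycle_adj p q.
Proof.
have key (a b : 'I_m) : ((a + d) %% m == ((b + d) %% m).+1 %% m) = (val a == (val b).+1 %% m).
  rewrite -addn1 modnDml addn1 -addSn eqn_modDr modn_small //.
by rewrite /cycle_adj /= !key.
Qed.

Section Prod.
Variable t : nat.
Variable e : rel 'I_t.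
Variable n : 'I_t -> nat.
Hypothesis esym : symmetric e.
Hypothesis eirr : irreflexive e.

Notation TT := {i : 'I_t & 'I_(n i)}.
Notation E := (lex_cycles e n).
Notation Tg := (Tagged (fun i => 'I_(n i))).

Lemma lexE_same i (p q : 'I_(n i)) : E (Tg p) (Tg q) = cycle_adj p q.
Proof. by rewrite /lex_cycles /= eirr eqxx tagged_asE. Qed.

Lemma lexE_diff (x y : TT) : tag x != tag y -> E x y = e (tag x) (tag y).
Proof. by move=> h; rewrite /lex_cycles (negbTE h) orbF. Qed.

Lemma Tg_eq i (p q : 'I_(n i)) : (Tg p == Tg q) = (p == q).
Proof. by rewrite eq_Tagged. Qed.

Definition frot (d : 'I_t -> nat) (x : TT) : TT := Tg (rot (d (tag x)) (tagged x)).

Lemma frot_inj d : injective (frot d).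
Proof.
case=> [i p] [j q] /eqP; rewrite /frot /=.
case: (i =P j) => [eij|ne]; last by move/eq_tag => /= h; case: ne.
subst j.
by rewrite Tg_eq => /eqP /rot_inj ->.
Qed.

Lemma frot_e d x y : E (frot d x) (frot d y) = E x y.
Proof.
case: x y => [i p] [j q]; rewrite /frot /=.
case: (i =P j) => [eij|/eqP ne]; first by subst j; rewrite !lexE_same rot_adj.
by rewrite !lexE_diff.
Qed.

End Prod.



Section Main.
Variable t : nat.
Variable e : rel 'I_t.
Variable n : 'I_t -> nat.
Hypothesis t2 : 2 <= t.
Hypothesis esym : symmetric e.
Hypothesis eirr : irreflexive e.
Hypothesis econn : forall x y : 'I_t, connect e x y.
Hypothesis n7 : forall i, 7 <= n i.

Notation TT := {i : 'I_t & 'I_(n i)}.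
Notation E := (lex_cycles e n).
Notation Tg := (Tagged (fun i => 'I_(n i))).

Lemma card_split (S : {set TT}) : #|S| = \sum_i #|[set j : 'I_(n i) | Tg j \in S]|.
Proof.
rewrite -sum1_card (eq_bigr (fun i => \sum_(j : 'I_(n i) | Tg j \in S) 1)); last first.
  by move=> i _; rewrite -sum1_card; apply: eq_bigl => j; rewrite inE.
rewrite (sig_big_dep (fun i => true) (fun i j => Tg j \in S) (fun i j => 1)) /=.
by apply: eq_bigl => -[i j].
Qed.

Lemma ordt0 : 0 < t. Proof. exact: ltn_trans t2. Qed.

Lemma nbr i : exists j, e i j.
Proof.
case: i => [i Hi].
pose k : 'I_t := if i == 0 then Ordinal t2 else Ordinal ordt0.
have ik : Ordinal Hi != k by rewrite /k; case: (i =P 0) => h; rewrite -val_eqE /=; lia.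
have /connectP[p pth lst] := econn (Ordinal Hi) k.
case: p pth lst => [_ /= h|z p /= /andP[h _] _]; last by exists z.
by rewrite h eqxx in ik.
Qed.

Lemma n0 i : 0 < n i. Proof. exact: leq_trans (n7 i). Qed.

Lemma cardT3 : 2 < #|{: TT}|.
Proof.
rewrite -cardsT.
rewrite card_split (bigD1 (Ordinal ordt0)) //=.
rewrite (_ : #|_| = n (Ordinal ordt0)); first by have := n7 (Ordinal ordt0); lia.
by rewrite -[RHS]card_ord; apply: eq_card => j; rewrite !inE.
Qed.

Lemma dist_other i (p q : 'I_(n i)) s : tag s != i -> gdist E s (Tg p) = gdist E s (Tg q).
Proof.
move=> ne.
pose d := fun j : 'I_t => if j == i then q + n i - p else 0.
have fs : frot d s = s.
  case: s ne => j r /= ne; rewrite /frot /d /= (negbTE ne).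
  by congr existT; apply: val_inj; rewrite /= addn0 modn_small.
have fp : frot d (Tg p) = Tg q.
  rewrite /frot /d /= eqxx; congr existT; apply: val_inj => /=.
  have := ltn_ord p; have := ltn_ord q => hq hp.
  have -> : p + (q + n i - p) = q + n i by lia.
  by rewrite modnDr modn_small.
by rewrite -[in RHS]fs -fp (gdist_f (@frot_inj _ _ d) (frot_e eirr d)).
Qed.

Lemma dist_two i (w a : 'I_(n i)) : w != a -> ~~ cycle_adj w a -> gdist E (Tg w) (Tg a) = 2.
Proof.
move=> wa nadj; have [j eij] := nbr i.
have ij : i != j by apply/eqP => h; rewrite h eirr in eij.
apply: (gdist2 cardT3 (z := Tg (Ordinal (n0 j)))).
- by rewrite Tg_eq.
- by rewrite (lexE_same eirr).
- by rewrite lexE_diff.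
- by rewrite lexE_diff 1?eq_sym // esym.
Qed.

Lemma distinguish s x y :
  [|| (s == x) && (s != y), (s == y) && (s != x) | [&& s != x, s != y & E s x != E s y]] ->
  gdist E s x != gdist E s y.
Proof.
have T3 := cardT3.
case/or3P => [/andP[sx sy]|/andP[sy sx]|/and3P[sx sy h]].
- by rewrite (eqP (_ : gdist E s x == 0)) ?gdist0 // eq_sym gdist0.
- by rewrite (eqP (_ : gdist E s y == 0)) ?gdist0 // gdist0.
case: (boolP (E s x)) h => h1 h2.
  by rewrite (gdist1 T3 sx h1) eq_sym gdistN1 // negbNE h2.
by rewrite (gdist1 T3 sy (negbNE h2)) gdistN1.
Qed.

Lemma lower_i (S : {set TT}) : local_resolving E S ->
  forall i, ceil_div4 (n i) <= #|[set j : 'I_(n i) | Tg j \in S]|.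
Proof.
move=> /forallP res i; set Si := [set j | _].
have m0 := n0 i.
pose b (a : 'I_(n i)) : 'I_(n i) := Ordinal (ltn_pmod a.+1 m0).
pose nearb (a w : 'I_(n i)) := [|| w == a, cycle_adj w a, w == b a | cycle_adj w (b a)].
have ex a : exists w, (w \in Si) && nearb a w.
  have := res (Tg a) => /forallP /(_ (Tg (b a))) /implyP.
  rewrite (lexE_same eirr) /cycle_adj /= eqxx => /(_ isT) /existsP [s /andP[sS ds]].
  case: s sS ds => j w sS ds.
  case: (j =P i) => [ji|ne]; last first.
    have jne : j != i by apply/eqP.
    by rewrite (dist_other a (b a) (s := existT _ j w) jne) eqxx in ds.
  subst j; exists w; rewrite inE sS /=.
  rewrite /nearb; apply/negPn/negP => /norP[h1 /norP[h2 /norP[h3 h4]]].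
  by move: ds; rewrite (dist_two h1 h2) (dist_two h3 h4).
have dl a w : nearb a w -> delta (n i) a w < 4.
  move=> hn; apply: (delta_lt (n7 i) (ltn_ord a) (ltn_ord w) (b := b a)).
    by rewrite /= modS.
  move: hn => /or4P[/eqP->|/adjP h|/eqP->|/adjP h].
  - by left.
  - by right; left.
  - by right; right; left.
  - by right; right; right.
pose f (a : 'I_(n i)) : 'I_(n i) * 'I_4 :=
  if [pick w in Si | nearb a w] is Some w then (w, inord (delta (n i) a w)) else (a, ord0).
have fS a : exists2 w : 'I_(n i), f a = (w, inord (delta (n i) a w)) & (w \in Si) && nearb a w.
  rewrite /f; case: pickP => [w h|none]; first by exists w.
  by have [w h] := ex a; rewrite none in h.
have finj : injective f.
  move=> a a'; have [w -> /andP[wS nw]] := fS a; have [w' -> /andP[wS' nw']] := fS a'.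
  case=> ew; subst w' => /(congr1 (@nat_of_ord _)); rewrite !inordK ?dl // => h.
  by apply: val_inj; apply: delta_inj (ltn_ord a) (ltn_ord a') (ltn_ord w) h.
have : #|f @: [set: 'I_(n i)]| <= #|setX Si [set: 'I_4]|.
  apply: subset_leq_card; apply/subsetP => _ /imsetP[a _ ->].
  by have [w -> /andP[wS _]] := fS a; rewrite in_setX wS in_setT.
rewrite card_imset // cardsX !cardsT !card_ord => h.
exact: ceil_le.
Qed.

Definition S0 := [set x : TT | tagged x %% 4 == 0].

Lemma S0_card : #|S0| <= \sum_i ceil_div4 (n i).
Proof.
rewrite card_split; apply: leq_sum => i _.
pose g (j : 'I_(n i)) : 'I_(ceil_div4 (n i)) := Ordinal (lt_div4 (ltn_ord j)).
rewrite -[X in _ <= X]card_ord; apply: (leq_card_in g) => j j'.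
rewrite !inE /= => hj hj' /(congr1 val) /= h; apply: val_inj.
by rewrite /= (divn_eq j 4) (divn_eq j' 4) h (eqP hj) (eqP hj').
Qed.

Lemma S0_res : local_resolving E S0.
Proof.
apply/forallP => -[i a]; apply/forallP => -[j b]; apply/implyP.
case: (i =P j) => [eij|/eqP ne].
  subst j; rewrite (lexE_same eirr) => /adjP hadj.
  have [w [wm [w4 dp]]] := cover (n7 i) (ltn_ord a) (ltn_ord b) hadj.
  apply/existsP; exists (Tg (Ordinal wm)); rewrite inE /= w4 eqxx /=.
  apply: distinguish; rewrite !Tg_eq !(lexE_same eirr).
  move: dp; rewrite /distP => -[[e1 e2]|[[e1 e2]|[e1 [e2 [[e3 e4]|[e3 e4]]]]]].
  - by apply/orP; left; rewrite -!val_eqE /=; apply/andP; split; lia.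
  - by apply/orP; right; apply/orP; left; rewrite -!val_eqE /=; apply/andP; split; lia.
  - rewrite (introT (adjP (Ordinal wm) a) e3) (introF (adjP (Ordinal wm) b) e4).
    by apply/orP; right; apply/orP; right; rewrite -!val_eqE /=; apply/and3P; split=> //; lia.
  - rewrite (introF (adjP (Ordinal wm) a) e3) (introT (adjP (Ordinal wm) b) e4).
    by apply/orP; right; apply/orP; right; rewrite -!val_eqE /=; apply/and3P; split=> //; lia.
rewrite lexE_diff //= => eij.
have [w [hw nadj]] := cover_out (n7 i) (ltn_ord a).
have wm : w < n i by have := n7 i; case: hw => ->; lia.
apply/existsP; exists (Tg (Ordinal wm)); rewrite inE /=.
have -> : w %% 4 = 0 by case: hw => ->.
rewrite eqxx /=; apply: distinguish.
have sy : Tg (Ordinal wm) != existT _ j b.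
  by apply/negP => /eq_tag /= h; rewrite h eqxx in ne.
rewrite sy (lexE_diff e (x := Tg (Ordinal wm)) (y := existT _ j b) ne) eij.
rewrite Tg_eq (lexE_same eirr) (introF (adjP (Ordinal wm) a) nadj).
by case: (Ordinal wm == a); rewrite ?orbT.
Qed.

Lemma bigmin_le (I : eqType) (r : seq I) (P : pred I) (F : I -> nat) idx x :
  x \in r -> P x -> \big[minn/idx]_(i <- r | P i) F i <= F x.
Proof.
elim: r => // y r IH; rewrite inE big_cons => /orP[/eqP<-|xr] Px.
  by rewrite Px geq_minl.
case: (P y); last exact: IH.
by rewrite geq_min IH ?orbT.
Qed.

Lemma main : ldim E = \sum_i ceil_div4 (n i).
Proof.
apply/eqP; rewrite eqn_leq; apply/andP; split.
  rewrite /ldim; exact: leq_trans (bigmin_le _ _ (mem_index_enum S0) S0_res) S0_card.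
rewrite /ldim; apply: (big_ind (fun k => \sum_i ceil_div4 (n i) <= k)).
- rewrite -cardsT card_split; apply: leq_sum => i _.
  rewrite (_ : #|_| = n i); first by rewrite /ceil_div4; have := n7 i; lia.
  by rewrite -[RHS]card_ord; apply: eq_card => j; rewrite !inE.
- by move=> x y hx hy; rewrite leq_min hx hy.
- move=> S /lower_i h; rewrite card_split; exact: leq_sum.
Qed.
End Main.

Theorem proposition3 (t : nat) (e : rel 'I_t) (n : 'I_t -> nat) :
  2 <= t ->
  symmetric e -> irreflexive e ->
  (forall x y : 'I_t, connect e x y) ->
  (forall i, 7 <= n i) ->
  ldim (lex_cycles e n) = \sum_(i < t) ceil_div4 (n i).
Proof. move=> t2 es ei ec n7; exact: main. Qed.
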